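(* Let $\mathcal{C}\subseteq 2^{[n]}$ and $\mathcal{D}\subseteq 2^{[m]}$ be nonempty codes, and let $\mathcal{C}\times\mathcal{D}=\{c\cup(d+n)\mid c\in\mathcal{C},d\in\mathcal{D}\}\subseteq 2^{[n+m]}$, where $d+n=\{j+n\mid j\in d\}$. Then $\mathcal{C}$ and $\mathcal{D}$ are both convex if and only if $\mathcal{C}\times\mathcal{D}$ is convex, and in that case $\mathrm{mindim}(\mathcal{C}\times\mathcal{D})\le\mathrm{mindim}(\mathcal{C})+\mathrm{mindim}(\mathcal{D})$.
   Context: A code is a subset $\mathcal{C}\subseteq 2^{[n]}$. Given $U_1,\dots,U_n\subseteq X$, $\mathrm{code}(\mathcal{U},X)=\{\sigma\subseteq[n]\mid \bigcap_{i\in\sigma}U_i\setminus\bigcup_{j\notin\sigma}U_j\neq\emptyset\}$ with the empty intersection equal to $X$. A code is convex if it equals $\mathrm{code}(\mathcal{U},X)$ for some open convex $X\subseteq\mathbb{R}^d$ and convex open $U_i\subseteq X$; $\mathrm{mindim}$ is the least such $d$. *)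

(* Defs.v *)
From Stdlib Require Import Reals.
From mathcomp Require Import all_boot.
Set Implicit Arguments. Unset Strict Implicit. Unset Printing Implicit Defensive.

Definition pt (d : nat) := 'I_d -> R.

(* Open in the Euclidean topology (written with the equivalent sup-norm balls). *)
Definition is_open (d : nat) (U : pt d -> Prop) : Prop :=
  forall x, U x -> exists eps : R, Rlt 0 eps /\
    forall y : pt d, (forall i, Rlt (Rabs (Rminus (y i) (x i))) eps) -> U y.

Definition is_convex (d : nat) (U : pt d -> Prop) : Prop :=
  forall x y, U x -> U y -> forall t : R, Rle 0 t -> Rle t 1 ->
    U (fun i => Rplus (Rmult t (x i)) (Rmult (Rminus 1 t) (y i))).

(* C = code(U, X): sigma in C iff some point of X lies in U_i exactly for i in sigma
   (the empty intersection being X). *)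
Definition is_code_of (n d : nat) (C : {set {set 'I_n}})
    (U : 'I_n -> pt d -> Prop) (X : pt d -> Prop) : Prop :=
  forall sigma : {set 'I_n}, sigma \in C <->
    exists x : pt d, X x /\ (forall i, i \in sigma -> U i x)
                          /\ (forall j, j \notin sigma -> ~ U j x).

Definition convex_in_dim (n : nat) (C : {set {set 'I_n}}) (d : nat) : Prop :=
  exists (X : pt d -> Prop) (U : 'I_n -> pt d -> Prop),
    is_open X /\ is_convex X /\
    (forall i, is_open (U i) /\ is_convex (U i) /\ (forall x, U i x -> X x)) /\
    is_code_of C U X.

Definition convex_code (n : nat) (C : {set {set 'I_n}}) : Prop :=
  exists d, convex_in_dim C d.

Definition is_mindim (n : nat) (C : {set {set 'I_n}}) (k : nat) : Prop :=
  convex_in_dim C k /\ forall d, convex_in_dim C d -> (k <= d)%N.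

(* C x D = { c u (d + n) }, with [n] embedded by lshift and d+n by rshift. *)
Definition code_prod (n m : nat) (C : {set {set 'I_n}}) (D : {set {set 'I_m}})
  : {set {set 'I_(n + m)}} :=
  [set (@lshift n m @: c) :|: (@rshift n m @: e) | c : {set 'I_n} in C, e : {set 'I_m} in D].

(* Main.v *)
Require Import Defs.
From Stdlib Require Import Reals.
From mathcomp Require Import all_boot.
From mathcomp Require Import boolp.
From Stdlib Require Import FunctionalExtensionality.

Set Implicit Arguments. Unset Strict Implicit. Unset Printing Implicit Defensive.

Lemma open_ext d (P Q : pt d -> Prop) :
  (forall z, P z <-> Q z) -> is_open Q -> is_open P.
Proof.
move=> H HQ x /H Qx; have [e [e0 He]] := HQ x Qx.
by exists e; split => // y Hy; apply/H; apply: He.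
Qed.

Lemma convex_ext d (P Q : pt d -> Prop) :
  (forall z, P z <-> Q z) -> is_convex Q -> is_convex P.
Proof.
by move=> H HQ x y /H Px /H Py t t0 t1; apply/H; apply: HQ.
Qed.

Lemma open_and d (P Q : pt d -> Prop) :
  is_open P -> is_open Q -> is_open (fun z => P z /\ Q z).
Proof.
move=> HP HQ x [Px Qx].
have [e1 [e10 H1]] := HP x Px; have [e2 [e20 H2]] := HQ x Qx.
exists (Rmin e1 e2); split; first by apply: Rmin_pos.
move=> y Hy; split; [apply: H1|apply: H2] => i.
- exact: Rlt_le_trans (Hy i) (Rmin_l _ _).
- exact: Rlt_le_trans (Hy i) (Rmin_r _ _).
Qed.

Lemma convex_and d (P Q : pt d -> Prop) :
  is_convex P -> is_convex Q -> is_convex (fun z => P z /\ Q z).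
Proof.
move=> HP HQ x y [Px Qx] [Py Qy] t t0 t1; split; [exact: HP|exact: HQ].
Qed.

Lemma open_l a b (A : pt a -> Prop) :
  is_open A -> is_open (fun z : pt (a + b) => A (fun i => z (lshift b i))).
Proof.
move=> HA x Ax; have [e [e0 He]] := HA _ Ax.
by exists e; split => // y Hy; apply: He => i; apply: Hy.
Qed.

Lemma open_r a b (A : pt b -> Prop) :
  is_open A -> is_open (fun z : pt (a + b) => A (fun i => z (rshift a i))).
Proof.
move=> HA x Ax; have [e [e0 He]] := HA _ Ax.
by exists e; split => // y Hy; apply: He => i; apply: Hy.
Qed.

Lemma convex_l a b (A : pt a -> Prop) :
  is_convex A -> is_convex (fun z : pt (a + b) => A (fun i => z (lshift b i))).
Proof. by move=> HA x y Ax Ay t t0 t1; apply: HA. Qed.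

Lemma convex_r a b (A : pt b -> Prop) :
  is_convex A -> is_convex (fun z : pt (a + b) => A (fun i => z (rshift a i))).
Proof. by move=> HA x y Ax Ay t t0 t1; apply: HA. Qed.

Lemma shift_cases a b (k : 'I_(a + b)) :
  (exists i, k = lshift b i) \/ (exists j, k = rshift a j).
Proof.
rewrite -(splitK k); case: (split k) => [i|j]; [left; exists i|right; exists j]; by [].
Qed.

Lemma L_mem n m (c : {set 'I_n}) (e : {set 'I_m}) i :
  (lshift m i \in (@lshift n m @: c) :|: (@rshift n m @: e)) = (i \in c).
Proof.
rewrite inE (mem_imset _ _ (@lshift_inj n m)).
case: (boolP (i \in c)) => //= _; apply/imsetP => -[j _ /eqP].
by rewrite eq_lrshift.
Qed.

Lemma R_mem n m (c : {set 'I_n}) (e : {set 'I_m}) j :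
  (rshift n j \in (@lshift n m @: c) :|: (@rshift n m @: e)) = (j \in e).
Proof.
rewrite inE (mem_imset _ _ (@rshift_inj n m)) orbC.
case: (boolP (j \in e)) => //= _; apply/imsetP => -[i _ /eqP].
by rewrite eq_rlshift.
Qed.

Lemma restrict_code N n d (K : {set {set 'I_N}}) (f : 'I_n -> 'I_N)
    (T : 'I_N -> pt d -> Prop) W (C : {set {set 'I_n}}) :
  is_code_of K T W ->
  (forall c, c \in C <-> exists2 s, s \in K & c = [set i | f i \in s]) ->
  is_code_of C (fun i => T (f i)) W.
Proof.
move=> HK HC c; split.
- move/HC => [s /HK [x [Wx [H1 H2]]] ->]; exists x; split => //; split.
  + by move=> i; rewrite inE => /H1.
  + by move=> j; rewrite inE => /H2.
- move=> [x [Wx [H1 H2]]]; apply/HC.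
  exists [set k | `[< T k x >]].
    apply/HK; exists x; split => //; split.
    + by move=> i; rewrite inE => /asboolP.
    + by move=> j; rewrite inE => /asboolP.
  apply/setP => i; rewrite !inE; case: (boolP (i \in c)) => Hi.
  + by apply/esym/asboolP; apply: H1.
  + by apply/esym/asboolP; apply: H2.
Qed.

Lemma prod_convex n m (C : {set {set 'I_n}}) (D : {set {set 'I_m}}) a b :
  convex_in_dim C a -> convex_in_dim D b -> convex_in_dim (code_prod C D) (a + b).
Proof.
move=> [X [U [oX [cX [HU HC]]]]] [Y [V [oY [cY [HV HD]]]]].
pose zl (z : pt (a + b)) : pt a := fun i => z (lshift b i).
pose zr (z : pt (a + b)) : pt b := fun j => z (rshift a j).
pose X' (z : pt (a + b)) := X (zl z) /\ Y (zr z).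
pose U' (k : 'I_(n + m)) (z : pt (a + b)) :=
  X' z /\ ((forall i, k = lshift m i -> U i (zl z)) /\
           (forall j, k = rshift n j -> V j (zr z))).
have oX' : is_open X' by apply: open_and; [apply: open_l|apply: open_r].
have cX' : is_convex X' by apply: convex_and; [apply: convex_l|apply: convex_r].
have U'l i z : U' (lshift m i) z <-> X' z /\ U i (zl z).
  split => [[? [H1 _]]|[? H]]; first by split => //; apply: H1.
  split => //; split => [i' /lshift_inj <- //|j' /eqP].
  by rewrite eq_lrshift.
have U'r j z : U' (rshift n j) z <-> X' z /\ V j (zr z).
  split => [[? [_ H1]]|[? H]]; first by split => //; apply: H1.
  split => //; split => [i' /eqP|j' /rshift_inj <- //].
  by rewrite eq_rlshift.
exists X', U'; split => //; split => //; split.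
  move=> k; have [[i ->]|[j ->]] := shift_cases k;
  (split; last split; last by move=> z []).
  - (apply: open_ext (U'l i) _; apply: open_and => //; apply: open_l; apply HU).
  - apply: convex_ext (U'l i) _; apply: convex_and => //; apply: convex_l; apply HU.
  - (apply: open_ext (U'r j) _; apply: open_and => //; apply: open_r; apply HV).
  - apply: convex_ext (U'r j) _; apply: convex_and => //; apply: convex_r; apply HV.
move=> s; split.
- case/imset2P => c e cC eD ->.
  have [x [Xx [Hx1 Hx2]]] := (HC c).1 cC.
  have [y [Yy [Hy1 Hy2]]] := (HD e).1 eD.
  pose z : pt (a + b) := fun k => match split k with inl i => x i | inr j => y j end.
  have El : zl z = x.
    by apply: functional_extensionality => i; rewrite /zl /z (unsplitK (inl _ i)).
  have Er : zr z = y.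
    by apply: functional_extensionality => i; rewrite /zr /z (unsplitK (inr _ i)).
  have Xz : X' z by rewrite /X' El Er.
  exists z; split => //; split => k; have [[i ->]|[j ->]] := shift_cases k.
  + by rewrite L_mem => Hi; apply/U'l; rewrite El; split => //; apply: Hx1.
  + by rewrite R_mem => Hj; apply/U'r; rewrite Er; split => //; apply: Hy1.
  + by rewrite L_mem => Hi /U'l [_]; rewrite El; exact: (Hx2 _ Hi).
  + by rewrite R_mem => Hj /U'r [_]; rewrite Er; exact: (Hy2 _ Hj).
- move=> [z [Xz [H1 H2]]].
  have -> : s = (@lshift n m @: [set i | lshift m i \in s]) :|:
                (@rshift n m @: [set j | rshift n j \in s]).
    apply/setP => k; have [[i ->]|[j ->]] := shift_cases k.
    + by rewrite L_mem inE.
    + by rewrite R_mem inE.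
  apply/imset2P; apply: (Imset2spec (x1 := [set i | lshift m i \in s]) (x2 := [set j | rshift n j \in s])) => //.
  + apply/HC; exists (zl z); split; first by case: Xz.
    split => i; rewrite inE.
    * by move/H1/U'l => [].
    * by move=> Hi Ui; apply: (H2 _ Hi); apply/U'l.
  + apply/HD; exists (zr z); split; first by case: Xz.
    split => j; rewrite inE.
    * by move/H1/U'r => [].
    * by move=> Hj Vj; apply: (H2 _ Hj); apply/U'r.
Qed.

Lemma proj_l n m (C : {set {set 'I_n}}) (D : {set {set 'I_m}}) d :
  D != set0 -> convex_in_dim (code_prod C D) d -> convex_in_dim C d.
Proof.
move=> /set0Pn [e eD] [W [T [oW [cW [HT HK]]]]].
exists W, (fun i => T (lshift m i)); split => //; split => //; split.
  by move=> i; apply: HT.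
apply: restrict_code HK _ => c; split.
- move=> cC; exists ((@lshift n m @: c) :|: (@rshift n m @: e)).
    by apply/imset2P; apply: (Imset2spec (x1 := c) (x2 := e)).
  by apply/setP => i; rewrite inE L_mem.
- move=> [s /imset2P [c' e' cC _ ->] ->].
  suff -> : [set i | lshift m i \in (@lshift n m @: c') :|: (@rshift n m @: e')] = c' by [].
  by apply/setP => i; rewrite inE L_mem.
Qed.

Lemma proj_r n m (C : {set {set 'I_n}}) (D : {set {set 'I_m}}) d :
  C != set0 -> convex_in_dim (code_prod C D) d -> convex_in_dim D d.
Proof.
move=> /set0Pn [c cC] [W [T [oW [cW [HT HK]]]]].
exists W, (fun j => T (rshift n j)); split => //; split => //; split.
  by move=> i; apply: HT.
apply: restrict_code HK _ => e; split.
- move=> eD; exists ((@lshift n m @: c) :|: (@rshift n m @: e)).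
    by apply/imset2P; apply: (Imset2spec (x1 := c) (x2 := e)).
  by apply/setP => i; rewrite inE R_mem.
- move=> [s /imset2P [c' e' _ eD ->] ->].
  suff -> : [set j | rshift n j \in (@lshift n m @: c') :|: (@rshift n m @: e')] = e' by [].
  by apply/setP => i; rewrite inE R_mem.
Qed.

Theorem theorem4p3 (n m : nat) (C : {set {set 'I_n}}) (D : {set {set 'I_m}}) :
  C != set0 -> D != set0 ->
  ((convex_code C /\ convex_code D) <-> convex_code (code_prod C D)) /\
  (convex_code C -> convex_code D ->
     forall kC kD kCD : nat,
       is_mindim C kC -> is_mindim D kD -> is_mindim (code_prod C D) kCD ->
       (kCD <= kC + kD)%N).
Proof.
move=> C0 D0; split.
  split.
  - by move=> [[a Ha] [b Hb]]; exists (a + b)%N; apply: prod_convex.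
  - move=> [d Hd]; split; exists d; [exact: proj_l Hd|exact: proj_r Hd].
move=> _ _ kC kD kCD [HC _] [HD _] [_ H].
by apply: H; apply: prod_convex.
Qed.
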